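(* Let $\kappa$ be an algebraically closed field of characteristic zero, complete for a non-trivial non-Archimedean absolute value. Let $a,b\in\kappa$ with $|a|=1$, let $L(z)=az+b$, let $f\in\mathcal{M}(\kappa)$ be a meromorphic function not identically zero, and let $m$ be a positive integer. Then for every $r>|b|$, $$\mu(r,f\circ L)=\mu(r,f),\qquad \mu\!\left(r,\frac{f\circ L}{f}\right)=1,\qquad \mu\!\left(r,\frac{\Delta_L^mf}{f}\right)\le1.$$
   Context: $\mathcal{M}(\kappa)$ is the field of meromorphic functions over $\kappa$, i.e. quotients $g/h$ of entire functions (power series converging on all of $\kappa$), $h\not\equiv0$. For entire $g=\sum a_nz^n$, $\mu(r,g)=\max_n|a_n|r^n$; $\mu(r,g/h)=\mu(r,g)/\mu(r,h)$. $\Delta_Lf=f\circ L-f$ and $\Delta_L^mf=\Delta_L(\Delta_L^{m-1}f)$. *)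

(* Defs.v *)
From HB Require Import structures.
From mathcomp Require Import all_boot all_order all_algebra.
From mathcomp Require Import boolp classical_sets reals.
Set Implicit Arguments. Unset Strict Implicit. Unset Printing Implicit Defensive.
Import Order.TTheory GRing.Theory Num.Theory.
Local Open Scope ring_scope.
Local Open Scope classical_set_scope.

Definition abs_conv (R : realType) (K : nzRingType) (abs : K -> R)
  (u : nat -> K) (l : K) : Prop :=
  forall e : R, 0 < e -> exists N : nat, forall n : nat, (N <= n)%N -> abs (u n - l) < e.

Definition abs_cauchy (R : realType) (K : nzRingType) (abs : K -> R)
  (u : nat -> K) : Prop :=
  forall e : R, 0 < e -> exists N : nat, forall n m : nat,
    (N <= n)%N -> (N <= m)%N -> abs (u n - u m) < e.

Definition nonarch_complete_field (R : realType) (K : closedFieldType)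
  (abs : K -> R) : Prop :=
  [pchar K] =i pred0 /\
  (forall x : K, 0 <= abs x) /\
  (forall x : K, abs x = 0 <-> x = 0) /\
  (forall x y : K, abs (x * y) = abs x * abs y) /\
  (forall x y : K, abs (x + y) <= Num.max (abs x) (abs y)) /\
  (exists x : K, abs x != 0 /\ abs x != 1) /\
  (forall u : nat -> K, abs_cauchy abs u -> exists l, abs_conv abs u l).

Definition entire_coefs (R : realType) (K : nzRingType) (abs : K -> R)
  (a : nat -> K) : Prop :=
  forall r : R, 0 < r -> forall e : R, 0 < e ->
    exists N : nat, forall n : nat, (N <= n)%N -> abs (a n) * r ^+ n < e.

Definition entire_rep (R : realType) (K : nzRingType) (abs : K -> R)
  (F : K -> K) (a : nat -> K) : Prop :=
  entire_coefs abs a /\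
  forall z : K, abs_conv abs (fun n => \sum_(i < n) a i * z ^+ i) (F z).

Definition entire (R : realType) (K : nzRingType) (abs : K -> R) (F : K -> K) : Prop :=
  exists a, entire_rep abs F a.

(* The (unique) Taylor coefficients of an entire function (0 otherwise). *)
Definition coefs (R : realType) (K : nzRingType) (abs : K -> R) (F : K -> K) : nat -> K :=
  match pselect (exists a, entire_rep abs F a) with
  | left H => projT1 (cid H)
  | right _ => fun _ => 0
  end.

Definition mu_entire (R : realType) (K : nzRingType) (abs : K -> R)
  (r : R) (F : K -> K) : R :=
  sup (range (fun n : nat => abs (coefs abs F n) * r ^+ n)).

(* Meromorphic functions.  A meromorphic function is modelled as a function *)
(* f : K -> K (with arbitrary values at poles) for which there are entire g *)
(* and h, h not identically zero, with f = g / h outside the zero set of    *)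
(* some entire function k not identically zero (a "thin" exceptional set).  *)

Definition mero_rep (R : realType) (K : fieldType) (abs : K -> R)
  (f g h : K -> K) : Prop :=
  [/\ entire abs g, entire abs h, (exists z, h z != 0) &
      exists k : K -> K, [/\ entire abs k, (exists z, k z != 0) &
        forall z, k z != 0 -> h z != 0 /\ f z = g z / h z]].

Definition meromorphic (R : realType) (K : fieldType) (abs : K -> R)
  (f : K -> K) : Prop :=
  exists gh : (K -> K) * (K -> K), mero_rep abs f gh.1 gh.2.

Definition mero_zero (R : realType) (K : fieldType) (abs : K -> R)
  (f : K -> K) : Prop :=
  exists k : K -> K, [/\ entire abs k, (exists z, k z != 0) &
    forall z, k z != 0 -> f z = 0].

(* mu(r, g/h) = mu(r, g) / mu(r, h) (independent of the representation). *)
Definition mu (R : realType) (K : fieldType) (abs : K -> R)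
  (r : R) (f : K -> K) : R :=
  match pselect (meromorphic abs f) with
  | left H => let gh := projT1 (cid H) in
              mu_entire abs r gh.1 / mu_entire abs r gh.2
  | right _ => 0
  end.

Definition DeltaL (K : nzRingType) (L : K -> K) (f : K -> K) : K -> K :=
  fun z => f (L z) - f z.

Definition DeltaLn (K : nzRingType) (L : K -> K) (m : nat) (f : K -> K) : K -> K :=
  iter m (DeltaL L) f.

(* Main.v *)
Require Import Defs.
From HB Require Import structures.
From mathcomp Require Import all_boot all_order all_algebra.
From mathcomp Require Import boolp classical_sets reals.
From mathcomp Require Import ring lra zify.
Import Order.TTheory GRing.Theory Num.Theory.
Local Open Scope ring_scope.
Set Implicit Arguments. Unset Strict Implicit.

Section Abs.
Variables (R : realType) (K : closedFieldType) (abs : K -> R).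
Hypothesis Habs : nonarch_complete_field abs.

Lemma abs_ge0 x : 0 <= abs x.
Proof. by case: Habs => _ [H _]. Qed.
Lemma abs_eq0 x : abs x = 0 <-> x = 0.
Proof. by case: Habs => _ [_ [H _]]. Qed.
Lemma absM x y : abs (x * y) = abs x * abs y.
Proof. by case: Habs => _ [_ [_ [H _]]]. Qed.
Lemma abs_ultra x y : abs (x + y) <= Num.max (abs x) (abs y).
Proof. by case: Habs => _ [_ [_ [_ [H _]]]]. Qed.
Lemma abs0 : abs 0 = 0.
Proof. by apply/abs_eq0. Qed.
Lemma abs_gt0 x : x != 0 -> 0 < abs x.
Proof.
move=> hx; rewrite lt_def abs_ge0 andbT; apply/eqP => /abs_eq0 h.
by rewrite h eqxx in hx.
Qed.
Lemma abs1 : abs 1 = 1.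
Proof.
have h1 : abs 1 != 0 by apply/eqP => /abs_eq0 /eqP; rewrite oner_eq0.
have := absM 1 1; rewrite mulr1 => h.
by apply: (mulfI h1); rewrite -h mulr1.
Qed.
Lemma absN1 : abs (-1) = 1.
Proof.
have := absM (-1) (-1); rewrite mulrNN mulr1 abs1 => h.
have h0 := abs_ge0 (-1).
have : (abs (-1) - 1) * (abs (-1) + 1) = 0.
  by rewrite mulrDr !mulrBl -h; ring.
move/eqP; rewrite mulf_eq0 => /orP [/eqP|/eqP]; lra.
Qed.
Lemma absN x : abs (- x) = abs x.
Proof. by rewrite -mulN1r absM absN1 mul1r. Qed.
Lemma absB x y : abs (x - y) = abs (y - x).
Proof. by rewrite -absN opprB. Qed.
Lemma absX x n : abs (x ^+ n) = abs x ^+ n.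
Proof. by elim: n => [|n IH]; rewrite ?expr0 ?abs1 // !exprS absM IH. Qed.
Lemma absV x : abs (x^-1) = (abs x)^-1.
Proof.
have [->|hx] := eqVneq x 0; first by rewrite invr0 abs0 invr0.
have h := absM x x^-1; rewrite mulfV // abs1 in h.
have hx' : abs x != 0 by rewrite gt_eqF // abs_gt0.
by apply: (mulfI hx'); rewrite -h mulfV.
Qed.
Lemma abs_ultra_le x y M : abs x <= M -> abs y <= M -> abs (x + y) <= M.
Proof. move=> hx hy; apply: le_trans (abs_ultra x y) _; by rewrite ge_max hx hy. Qed.
Lemma abs_ultra_lt x y M : abs x < M -> abs y < M -> abs (x + y) < M.
Proof. move=> hx hy; apply: le_lt_trans (abs_ultra x y) _; by rewrite gt_max hx hy. Qed.
Lemma abs_natr n : abs (n%:R) <= 1.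
Proof.
elim: n => [|n IH]; first by rewrite abs0.
by rewrite -addn1 natrD; apply: abs_ultra_le => //; rewrite abs1.
Qed.
Lemma abs_add_eq x y : abs y < abs x -> abs (x + y) = abs x.
Proof.
move=> h; apply/eqP; rewrite eq_le; apply/andP; split.
  by apply: abs_ultra_le => //; apply: ltW.
have := abs_ultra (x + y) (- y); rewrite addrK absN.
rewrite le_max => /orP [//|h2].
by move: (lt_le_trans h h2); rewrite ltxx.
Qed.

Lemma abs_big_le (I : Type) (r : seq I) (P : pred I) (F : I -> K) M :
  0 <= M -> (forall i, P i -> abs (F i) <= M) ->
  abs (\sum_(i <- r | P i) F i) <= M.
Proof.
move=> hM hF; apply: (big_ind (fun x => abs x <= M)) => //.
- by rewrite abs0.
- by move=> x y; apply: abs_ultra_le.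
Qed.
Lemma abs_big_lt (I : Type) (r : seq I) (P : pred I) (F : I -> K) M :
  0 < M -> (forall i, P i -> abs (F i) < M) ->
  abs (\sum_(i <- r | P i) F i) < M.
Proof.
move=> hM hF; apply: (big_ind (fun x => abs x < M)) => //.
- by rewrite abs0.
- by move=> x y; apply: abs_ultra_lt.
Qed.

Lemma bernoulli (h : R) n : 0 <= h -> 1 + n%:R * h <= (1 + h) ^+ n.
Proof.
move=> h0; elim: n => [|n IH]; first by rewrite mul0r addr0 expr0.
rewrite exprS -addn1 natrD.
have hn : 0 <= n%:R :> R by [].
have : 0 <= (1 + h) ^+ n by apply: exprn_ge0; lra.
nra.
Qed.

Lemma exists_small (d : R) : 0 < d -> exists z : K, 0 < abs z < d.
Proof.
move=> hd.
have [y /andP[hy0 hy1]] : exists y : K, 0 < abs y < 1.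
  case: Habs => _ [_ [_ [_ [_ [[x [hx0 hx1]] _]]]]].
  have x0 : x != 0 by apply: contraNneq hx0 => ->; rewrite abs0.
  have ax0 := abs_gt0 x0.
  case: (ltP (abs x) 1) => h.
    by exists x; rewrite ax0 h.
  exists x^-1; rewrite absV invr_gt0 ax0 /= invf_lt1 //.
  by rewrite lt_def hx1 h.
set t := abs y in hy0 hy1.
set h := t^-1 - 1.
have hh : 0 < h by rewrite /h subr_gt0 invf_gt1.
have hq : 0 <= (h * d)^-1 by rewrite invr_ge0; apply: mulr_ge0; apply: ltW.
set n := Num.Def.archi_bound ((h * d)^-1).
have hn : (h * d)^-1 < n%:R := archi_boundP hq.
exists (y ^+ n); rewrite absX exprn_gt0 //=.
have hb := bernoulli n (ltW hh).
have e1 : 1 + h = t^-1 by rewrite /h; ring.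
rewrite e1 in hb.
have hdi : d^-1 = (h * d)^-1 * h by field; rewrite !gt_eqF.
have : d^-1 < (t^-1) ^+ n.
  apply: lt_le_trans hb; rewrite hdi.
  have : (h * d)^-1 * h < n%:R * h by rewrite ltr_pM2r.
  lra.
rewrite exprVn ltf_pV2 ?posrE ?exprn_gt0 //.
Qed.

Definition small (u : nat -> K) := forall e : R, 0 < e ->
  exists N : nat, forall n : nat, (N <= n)%N -> abs (u n) < e.

Lemma le_eps (x M : R) : 0 <= M -> (forall e, 0 < e -> x <= Num.max e M) -> x <= M.
Proof.
move=> hM h; rewrite leNgt; apply/negP => hx.
have he : 0 < (x + M) / 2 by lra.
have := h _ he; rewrite le_max => /orP []; lra.
Qed.

Lemma le0_eps (x : R) : 0 <= x -> (forall e, 0 < e -> x < e) -> x = 0.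
Proof.
move=> hx h; apply/eqP; rewrite eq_le hx andbT leNgt; apply/negP => h0.
by move: (h x h0); rewrite ltxx.
Qed.

Lemma conv_uniq u l1 l2 : abs_conv abs u l1 -> abs_conv abs u l2 -> l1 = l2.
Proof.
move=> h1 h2; apply/eqP; rewrite -subr_eq0; apply/eqP/abs_eq0.
apply: le0_eps; first exact: abs_ge0.
move=> e he; have [N1 hN1] := h1 e he; have [N2 hN2] := h2 e he.
have := hN1 (maxn N1 N2) (leq_maxl _ _); have := hN2 (maxn N1 N2) (leq_maxr _ _).
move=> a b; have -> : l1 - l2 = (u (maxn N1 N2) - l2) - (u (maxn N1 N2) - l1) by ring.
by apply: abs_ultra_lt; rewrite ?absN.
Qed.

Lemma conv_close u v l : abs_conv abs u l -> small (fun n => v n - u n) ->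
  abs_conv abs v l.
Proof.
move=> hu hv e he; have [N1 hN1] := hu e he; have [N2 hN2] := hv e he.
exists (maxn N1 N2) => n hn.
have -> : v n - l = (v n - u n) + (u n - l) by ring.
apply: abs_ultra_lt; [apply: hN2 | apply: hN1]; apply: leq_trans hn;
  [apply: leq_maxr | apply: leq_maxl].
Qed.

Lemma conv_ext u v l : (forall n, v n = u n) -> abs_conv abs u l -> abs_conv abs v l.
Proof. by move=> h hu e he; have [N hN] := hu e he; exists N => n hn; rewrite h; apply: hN. Qed.

Lemma conv_const c : abs_conv abs (fun _ => c) c.
Proof. by move=> e he; exists 0%N => n _; rewrite subrr abs0. Qed.

Lemma conv_small0 u : small u -> abs_conv abs u 0.
Proof. by move=> h e he; have [N hN] := h e he; exists N => n hn; rewrite subr0; apply: hN. Qed.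

Lemma conv_sub u v l m : abs_conv abs u l -> abs_conv abs v m ->
  abs_conv abs (fun n => u n - v n) (l - m).
Proof.
move=> hu hv e he; have [N1 hN1] := hu e he; have [N2 hN2] := hv e he.
exists (maxn N1 N2) => n hn.
have -> : u n - v n - (l - m) = (u n - l) + - (v n - m) by ring.
apply: abs_ultra_lt; rewrite ?absN; [apply: hN1 | apply: hN2]; apply: leq_trans hn;
  [apply: leq_maxl | apply: leq_maxr].
Qed.

Lemma fin_bound (f : nat -> R) N : exists B, forall n, (n < N)%N -> f n <= B.
Proof.
elim: N => [|N [B hB]]; first by exists 0.
exists (Num.max B (f N)) => n; rewrite ltnS leq_eqVlt => /orP [/eqP ->|h].
  by rewrite le_max lexx orbT.
by rewrite le_max hB.
Qed.

Lemma small_bound u : small u -> exists B, 0 < B /\ forall n, abs (u n) <= B.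
Proof.
move=> h; have [N hN] := h 1 ltr01.
have [B hB] := fin_bound (fun n => abs (u n)) N.
exists (Num.max 1 B); split; first by rewrite lt_max ltr01.
move=> n; case: (ltnP n N) => hn; first by rewrite le_max hB // orbT.
by rewrite le_max ltW ?hN.
Qed.

Lemma conv_bound u l : abs_conv abs u l -> exists B, 0 < B /\ forall n, abs (u n) <= B.
Proof.
move=> h; have [N hN] := h 1 ltr01.
have [B hB] := fin_bound (fun n => abs (u n)) N.
exists (Num.max (Num.max 1 (abs l)) B); split; first by rewrite !lt_max ltr01.
move=> n; case: (ltnP n N) => hn; first by rewrite le_max hB // orbT.
rewrite le_max; apply/orP; left.
have -> : u n = (u n - l) + l by ring.
apply: abs_ultra_le; first by apply: le_trans (ltW (hN _ hn)) _; rewrite le_max lexx.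
by rewrite le_max lexx orbT.
Qed.

Lemma conv_mul u v l m : abs_conv abs u l -> abs_conv abs v m ->
  abs_conv abs (fun n => u n * v n) (l * m).
Proof.
move=> hu hv; have [B [hB0 hB]] := conv_bound hu.
move=> e he.
have hm0 := abs_ge0 m.
have he1 : 0 < e / B by apply: divr_gt0.
have he2 : 0 < e / (abs m + 1) by apply: divr_gt0 => //; lra.
have [N1 hN1] := hu _ he2; have [N2 hN2] := hv _ he1.
exists (maxn N1 N2) => n hn.
have -> : u n * v n - l * m = u n * (v n - m) + (u n - l) * m by ring.
have h1 := hN1 n (leq_trans (leq_maxl _ _) hn).
have h2 := hN2 n (leq_trans (leq_maxr _ _) hn).
apply: abs_ultra_lt; rewrite absM.
- have hb := hB n; have ha := abs_ge0 (u n); have hc := abs_ge0 (v n - m).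
  rewrite ltr_pdivlMr // in h2.
  apply: le_lt_trans h2.
  by rewrite mulrC ler_wpM2l.
- have ha := abs_ge0 (u n - l).
  rewrite ltr_pdivlMr in h1; last lra.
  apply: le_lt_trans h1; rewrite ler_wpM2l //; lra.
Qed.

Lemma sum_split (u : nat -> K) n m : (n <= m)%N ->
  \sum_(i < m) u i = \sum_(i < n) u i + \sum_(n <= i < m) u i.
Proof. by move=> h; rewrite -!(big_mkord xpredT) (@big_cat_nat _ _ _ n 0 m _ _ (leq0n n) h). Qed.

Lemma abs_nat_lt (u : nat -> K) n m e : 0 < e ->
  (forall i, (n <= i)%N -> abs (u i) < e) -> abs (\sum_(n <= i < m) u i) < e.
Proof.
move=> he h; rewrite big_nat_cond; apply: abs_big_lt => // i /andP [/andP [hi _] _].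
exact: h.
Qed.

Lemma abs_nat_le (u : nat -> K) n m e : 0 <= e ->
  (forall i, (n <= i)%N -> abs (u i) <= e) -> abs (\sum_(n <= i < m) u i) <= e.
Proof.
move=> he h; rewrite big_nat_cond; apply: abs_big_le => // i /andP [/andP [hi _] _].
exact: h.
Qed.

Lemma series_conv u : small u -> exists l, abs_conv abs (fun N => \sum_(i < N) u i) l.
Proof.
move=> hu.
case: Habs => _ [_ [_ [_ [_ [_ hc]]]]].
apply: hc => e he; have [N hN] := hu e he; exists N => n m hn hm.
wlog hnm : n m hn hm / (n <= m)%N.
  move=> W; case: (leqP n m) => h; first exact: W.
  by rewrite absB; apply: W => //; apply: ltnW.
rewrite (sum_split u hnm) opprD addrA subrr add0r absN.
apply: abs_nat_lt => // i hi; apply: hN; exact: leq_trans hi.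
Qed.

Lemma tail_bound (u : nat -> K) (l : K) (M : R) (N0 : nat) : abs_conv abs (fun N => \sum_(i < N) u i) l -> 0 <= M ->
  (forall i, (N0 <= i)%N -> abs (u i) <= M) -> abs (l - \sum_(i < N0) u i) <= M.
Proof.
move=> hl hM hu; apply: le_eps => // e he.
have [N hN] := hl e he.
have hn : (N0 <= maxn N N0)%N by apply: leq_maxr.
have -> : l - \sum_(i < N0) u i = - (\sum_(i < maxn N N0) u i - l) +
   (\sum_(i < maxn N N0) u i - \sum_(i < N0) u i) by ring.
apply: abs_ultra_le; rewrite ?absN.
  by rewrite le_max ltW ?orbT // hN // leq_maxl.
rewrite (sum_split u hn) addrAC subrr add0r le_max; apply/orP; right.
exact: abs_nat_le.
Qed.


Lemma pow_le (x y : R) n : 0 <= x -> x <= y -> x ^+ n <= y ^+ n.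
Proof.
move=> hx hxy; apply: lerXn2r; rewrite ?nnegrE //; exact: le_trans hxy.
Qed.

Local Notation EC := (entire_coefs abs).

Definition muc (r : R) (a : nat -> K) := sup (range (fun n : nat => abs (a n) * r ^+ n)).

Lemma EC_bound a r : EC a -> 0 < r -> exists B, 0 < B /\ forall n, abs (a n) * r ^+ n <= B.
Proof.
move=> ha hr; have [N hN] := ha r hr 1 ltr01.
have [B hB] := fin_bound (fun n => abs (a n) * r ^+ n) N.
exists (Num.max 1 B); split; first by rewrite lt_max ltr01.
move=> n; case: (ltnP n N) => hn; first by rewrite le_max hB // orbT.
by rewrite le_max ltW ?hN.
Qed.

Lemma EC_small a z : EC a -> small (fun n => a n * z ^+ n).
Proof.
move=> ha e he.
set r := Num.max (abs z) 1.
have hr : 0 < r by rewrite lt_max ltr01 orbT.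
have [N hN] := ha r hr e he; exists N => n hn.
apply: le_lt_trans (hN n hn).
rewrite absM absX ler_wpM2l ?abs_ge0 //; apply: pow_le; first exact: abs_ge0.
by rewrite le_max lexx.
Qed.

Lemma muc_hasub a r : EC a -> 0 < r -> has_ubound (range (fun n : nat => abs (a n) * r ^+ n)).
Proof. by move=> ha hr; have [B [_ hB]] := EC_bound ha hr; exists B => _ [n _ <-]. Qed.

Lemma muc_ub a r n : EC a -> 0 < r -> abs (a n) * r ^+ n <= muc r a.
Proof. by move=> ha hr; rewrite /muc; apply: (ub_le_sup (muc_hasub ha hr)); exists n. Qed.

Lemma muc_le a r M : (forall n, abs (a n) * r ^+ n <= M) -> muc r a <= M.
Proof. by move=> h; apply: ge_sup; [exists (abs (a 0%N) * r ^+ 0); exists 0%N | move=> _ [n _ <-]]. Qed.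

Lemma muc_ge0 a r : EC a -> 0 < r -> 0 <= muc r a.
Proof.
move=> ha hr; apply: le_trans (muc_ub 0 ha hr).
by rewrite expr0 mulr1 abs_ge0.
Qed.

Lemma muc_gt0 a r : EC a -> 0 < r -> (exists n, a n != 0) -> 0 < muc r a.
Proof.
move=> ha hr [n hn]; apply: lt_le_trans (muc_ub n ha hr).
by rewrite mulr_gt0 ?abs_gt0 ?exprn_gt0.
Qed.

Lemma muc_attain a r : EC a -> 0 < r -> 0 < muc r a ->
  exists i0, abs (a i0) * r ^+ i0 = muc r a /\
    forall n, (i0 < n)%N -> abs (a n) * r ^+ n < muc r a.
Proof.
move=> ha hr hS; set S := muc r a in hS *.
have hS2 : 0 < S / 2 by lra.
have [N hN] := ha r hr _ hS2.
pose P := fun n => abs (a n) * r ^+ n == S.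
have exP : exists n, P n.
  apply/not_existsP => hne.
  have hlt : forall n, abs (a n) * r ^+ n < S.
    move=> n; rewrite lt_def muc_ub // andbT.
    by apply/negP => /eqP h; apply: (hne n); rewrite /P h.
  have [M [hM1 hM2]] : exists M, M < S /\ forall n, (n < N)%N -> abs (a n) * r ^+ n <= M.
    elim: N {hN} => [|N [M [hM1 hM2]]]; first by exists 0.
    exists (Num.max M (abs (a N) * r ^+ N)); split; first by rewrite gt_max hM1 hlt.
    move=> n; rewrite ltnS leq_eqVlt => /orP [/eqP ->|h].
      by rewrite le_max lexx orbT.
    by rewrite le_max hM2.
  have : S <= Num.max M (S / 2).
    apply: muc_le => n; case: (ltnP n N) => hn; first by rewrite le_max hM2.
    by rewrite le_max (ltW (hN _ hn)) orbT.
  rewrite le_max => /orP [] ?; lra.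
have ubP : forall n, P n -> (n <= N)%N.
  move=> n /eqP hn; rewrite leqNgt; apply/negP => hn2.
  by have := hN n (ltnW hn2); rewrite hn; lra.
case: (ex_maxnP exP ubP) => i0 /eqP hi0 hmax.
exists i0; split => // n hn; rewrite lt_def muc_ub // andbT.
apply/negP => /eqP h; have := hmax n; rewrite /P h eqxx => /(_ isT).
by rewrite leqNgt hn.
Qed.


Local Notation rep := (entire_rep abs).

Lemma rep_zero F a : rep F a -> (forall n, a n = 0) -> forall z, F z = 0.
Proof.
move=> [_ hF] ha z; apply: (conv_uniq (hF z)).
apply: (@conv_ext (fun _ => 0)); last exact: conv_const.
by move=> n; apply: big1 => i _; rewrite ha mul0r.
Qed.

Lemma rep_sub F G a c : rep F a -> rep G c ->
  rep (fun z => F z - G z) (fun n => a n - c n).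
Proof.
move=> [ha hF] [hc hG]; split.
  move=> r hr e he; have [N1 hN1] := ha r hr e he; have [N2 hN2] := hc r hr e he.
  exists (maxn N1 N2) => n hn.
  have h1 := hN1 n (leq_trans (leq_maxl _ _) hn).
  have h2 := hN2 n (leq_trans (leq_maxr _ _) hn).
  have hr0 : 0 <= r ^+ n by apply: exprn_ge0; apply: ltW.
  apply: le_lt_trans (_ : Num.max (abs (a n)) (abs (c n)) * r ^+ n < e).
    apply: ler_wpM2r => //; apply: le_trans (abs_ultra _ _) _; by rewrite absN.
  by rewrite maxr_pMl // gt_max h1 h2.
move=> z; apply: (@conv_ext (fun N => \sum_(i < N) a i * z ^+ i - \sum_(i < N) c i * z ^+ i)).
  by move=> N; rewrite -sumrB; apply: eq_bigr => i _; rewrite mulrBl.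
exact: conv_sub.
Qed.

Lemma NZ F a : rep F a -> (exists n, a n != 0) ->
  exists d, 0 < d /\ forall z, 0 < abs z < d -> F z != 0.
Proof.
move=> [ha hF] exn.
case: (ex_minnP exn) => k0 hk0 hmin.
have [B [hB0 hB]] := EC_bound ha ltr01.
have hB' : forall n, abs (a n) <= B by move=> n; have := hB n; rewrite expr1n mulr1.
set A0 := abs (a k0).
have hA0 : 0 < A0 by apply: abs_gt0.
exists (Num.min 1 (A0 / B)); split; first by rewrite lt_min ltr01 divr_gt0.
move=> z /andP [hz0]; rewrite lt_min => /andP [hz1 hz2].
set t := abs z in hz0 hz1 hz2.
rewrite ltr_pdivlMr // in hz2.
set A := A0 * t ^+ k0.
have hA : 0 < A by rewrite mulr_gt0 // exprn_gt0.
have hpsum : forall N, (k0 < N)%N -> abs (\sum_(i < N) a i * z ^+ i) = A.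
  move=> N hN.
  rewrite (bigD1 (Ordinal hN)) //= abs_add_eq; first by rewrite absM absX.
  rewrite absM absX -/A0; apply: abs_big_lt => // i hi.
  have hik : val i != k0 by apply: contraNneq hi => h; apply/eqP/val_inj.
  case: (ltngtP (val i) k0) => h; last by rewrite h eqxx in hik.
    have -> : a i = 0.
      apply/eqP; apply: contraTT h => h'; rewrite -leqNgt; exact: hmin.
    by rewrite mul0r abs0.
  rewrite absM absX.
  have ht1 : t ^+ i <= t ^+ k0.+1 by apply: ler_wiXn2l => //; apply: ltW.
  have hti : 0 <= t ^+ i by apply: exprn_ge0; apply: ltW.
  apply: le_lt_trans (_ : B * t ^+ k0.+1 < A0 * t ^+ k0).
    apply: le_trans (ler_wpM2r hti (hB' i)) _.
    by apply: ler_wpM2l => //; apply: ltW.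
  rewrite exprS mulrA ltr_pM2r ?exprn_gt0 //.
  by rewrite mulrC.
have hz := hF z.
have [N hN] := hz A hA.
have hk : (k0 < maxn N k0.+1)%N by rewrite leq_max leqnn orbT.
have h1 := hpsum _ hk.
have h2 := hN _ (leq_maxl N k0.+1).
set P := \sum_(i < maxn N k0.+1) a i * z ^+ i in h1 h2.
have -> : F z = P + - (P - F z) by ring.
apply/eqP => /abs_eq0; rewrite abs_add_eq ?absN ?h1 //; lra.
Qed.

Lemma rep_uniq F a a' : rep F a -> rep F a' -> a = a'.
Proof.
move=> ha ha'; apply: funext => n.
apply/eqP; rewrite -subr_eq0; apply/negPn/negP => hn.
have [d [hd hz]] := NZ (rep_sub ha ha') (ex_intro _ n hn).
have [z hz'] := exists_small hd.
by have := hz z hz'; rewrite subrr eqxx.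
Qed.


Lemma rep_nz F a : rep F a -> (exists z, F z != 0) -> exists n, a n != 0.
Proof.
move=> ha [z hz]; apply/not_existsP => h.
suff H : forall n, a n = 0 by move: hz; rewrite (rep_zero ha H z) eqxx.
by move=> n; apply/eqP/negPn/negP => hn; apply: (h n).
Qed.

Definition cprod (a c : nat -> K) n := \sum_(i < n.+1) a i * c (n - i)%N.

Lemma tfact a c r n (i : nat) : (i <= n)%N ->
  abs (a i * c (n - i)%N) * r ^+ n = (abs (a i) * r ^+ i) * (abs (c (n - i)%N) * r ^+ (n - i)).
Proof.
move=> h; have e : r ^+ n = r ^+ i * r ^+ (n - i) by rewrite -exprD subnKC.
by rewrite absM e; ring.
Qed.

Lemma EC_cprod a c : EC a -> EC c -> EC (cprod a c).
Proof.
move=> ha hc r hr e he.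
have [Ba [hBa0 hBa]] := EC_bound ha hr; have [Bc [hBc0 hBc]] := EC_bound hc hr.
have [Na hNa] := ha r hr (e / Bc) (divr_gt0 he hBc0).
have [Nc hNc] := hc r hr (e / Ba) (divr_gt0 he hBa0).
exists (Na + Nc)%N => n hn.
have hrn : 0 < r ^+ n by rewrite exprn_gt0.
rewrite -ltr_pdivlMr //; apply: abs_big_lt; first by rewrite divr_gt0.
move=> i _; rewrite ltr_pdivlMr // tfact; last by rewrite -ltnS.
have hta := abs_ge0 (a i); have htc := abs_ge0 (c (n - i)%N).
have hri : 0 <= r ^+ i by apply: exprn_ge0; apply: ltW.
have hrni : 0 <= r ^+ (n - i) by apply: exprn_ge0; apply: ltW.
have h0a : 0 <= abs (a i) * r ^+ i by apply: mulr_ge0.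
have h0c : 0 <= abs (c (n - i)%N) * r ^+ (n - i) by apply: mulr_ge0.
case: (leqP Na i) => hi.
  have h1 := hNa i hi; rewrite ltr_pdivlMr // in h1.
  apply: le_lt_trans h1; apply: ler_wpM2l => //; exact: hBc.
have hni : (Nc <= n - i)%N by lia.
have h1 := hNc _ hni; rewrite ltr_pdivlMr // in h1.
apply: le_lt_trans h1; rewrite mulrC; apply: ler_wpM2l => //; exact: hBa.
Qed.


Lemma muc_cprod a c r : EC a -> EC c -> 0 < r ->
  muc r (cprod a c) = muc r a * muc r c.
Proof.
move=> ha hc hr.
have hac := EC_cprod ha hc.
have hSa := muc_ge0 ha hr; have hSc := muc_ge0 hc hr.
apply/eqP; rewrite eq_le; apply/andP; split.
  apply: muc_le => n.
  have hrn : 0 < r ^+ n by rewrite exprn_gt0.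
  rewrite -ler_pdivlMr //; apply: abs_big_le.
    by apply: divr_ge0; [apply: mulr_ge0 | apply: ltW].
  move=> i _; rewrite ler_pdivlMr // tfact; last by rewrite -ltnS.
  have hr0 : 0 <= r by apply: ltW.
  apply: ler_pM.
  - by apply: mulr_ge0; [exact: abs_ge0 | apply: exprn_ge0].
  - by apply: mulr_ge0; [exact: abs_ge0 | apply: exprn_ge0].
  - exact: muc_ub.
  - exact: muc_ub.
have [->|Sa0] := eqVneq (muc r a) 0; first by rewrite mul0r muc_ge0.
have [->|Sc0] := eqVneq (muc r c) 0; first by rewrite mulr0 muc_ge0.
have hSa' : 0 < muc r a by rewrite lt_def Sa0.
have hSc' : 0 < muc r c by rewrite lt_def Sc0.
have [i0 [hi0 hmi]] := muc_attain ha hr hSa'.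
have [j0 [hj0 hmj]] := muc_attain hc hr hSc'.
set n := (i0 + j0)%N.
have hin : (i0 < n.+1)%N by rewrite ltnS leq_addr.
have hrn : 0 < r ^+ n by rewrite exprn_gt0.
apply: le_trans (muc_ub n hac hr).
have hnj : (n - i0 = j0)%N by rewrite /n addKn.
have hmain : abs (a i0 * c (n - i0)%N) * r ^+ n = muc r a * muc r c.
  by rewrite tfact ?leq_addr // hnj hi0 hj0.
rewrite /cprod (bigD1 (Ordinal hin)) //= abs_add_eq; first by rewrite hmain.
have hmain' : abs (a i0 * c (n - i0)%N) = muc r a * muc r c / r ^+ n.
  by rewrite -hmain mulfK // gt_eqF.
rewrite hmain'; apply: abs_big_lt; first by rewrite !divr_gt0 ?mulr_gt0.
move=> i hi; have hii : val i != i0 by apply: contraNneq hi => h; apply/eqP/val_inj.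
have hin' : (i <= n)%N by rewrite -ltnS.
rewrite ltr_pdivlMr // tfact //.
have hta := abs_ge0 (a i); have htc := abs_ge0 (c (n - i)%N).
have hri : 0 <= r ^+ i by apply: exprn_ge0; apply: ltW.
have hrni : 0 <= r ^+ (n - i) by apply: exprn_ge0; apply: ltW.
have h0a : 0 <= abs (a i) * r ^+ i by apply: mulr_ge0.
have h0c : 0 <= abs (c (n - i)%N) * r ^+ (n - i) by apply: mulr_ge0.
case: (ltngtP (val i) i0) => h; last by rewrite h eqxx in hii.
  have h1 : (j0 < n - i)%N by rewrite /n ltn_subRL ltn_add2r.
  have h2 := hmj _ h1.
  have h3 := muc_ub i ha hr.
  apply: le_lt_trans (_ : muc r a * (abs (c (n - i)%N) * r ^+ (n - i)) < _).
    by apply: ler_wpM2r.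
  by rewrite ltr_pM2l.
have h2 := hmi _ h.
have h3 := muc_ub (n - i)%N hc hr.
apply: le_lt_trans (_ : (abs (a i) * r ^+ i) * muc r c < _).
  by apply: ler_wpM2l.
by rewrite ltr_pM2r.
Qed.

Lemma cauchy_sum (u v : nat -> K) N :
  \sum_(n < N) \sum_(i < n.+1) u i * v (n - i)%N =
  \sum_(i < N) u i * \sum_(j < N - i) v j.
Proof.
elim: N => [|N IH]; first by rewrite !big_ord0.
rewrite big_ord_recr /= IH.
transitivity (\sum_(i < N.+1) u i * \sum_(j < N - i) v j +
              \sum_(i < N.+1) u i * v (N - i)%N).
  by rewrite [X in _ = X + _]big_ord_recr /= subnn big_ord0 mulr0 addr0.
rewrite -big_split /=; apply: eq_bigr => i _.
have hi : (i <= N)%N by rewrite -ltnS.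
by rewrite -mulrDr subSn // big_ord_recr.
Qed.

Lemma series_mul (u v : nat -> K) U V : small u -> small v ->
  abs_conv abs (fun N => \sum_(i < N) u i) U ->
  abs_conv abs (fun N => \sum_(i < N) v i) V ->
  abs_conv abs (fun N => \sum_(n < N) \sum_(i < n.+1) u i * v (n - i)%N) (U * V).
Proof.
move=> hu hv hU hV.
have hUV := conv_mul hU hV.
apply: (conv_close hUV).
move=> e he.
have [Bu [hBu0 hBu]] := small_bound hu.
have [Bv [hBv0 hBv]] := small_bound hv.
have [N1 hN1] := hu (e / Bv) (divr_gt0 he hBv0).
have [N2 hN2] := hV (e / Bu) (divr_gt0 he hBu0).
exists (N1 + N2)%N => N hN.
rewrite cauchy_sum mulr_suml -sumrB.
apply: abs_big_lt => // i _.
rewrite -mulrBr absM.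
set Vs := fun k => \sum_(j < k) v j.
have hi : (i <= N)%N by apply: ltnW.
have hd : abs (\sum_(j < N - i) v j - \sum_(j < N) v j) <= Bv.
  rewrite (sum_split v (leq_subr i N)) opprD addrA subrr add0r absN.
  by apply: abs_nat_le => //; apply: ltW.
have hua := abs_ge0 (u i).
have hda := abs_ge0 (\sum_(j < N - i) v j - \sum_(j < N) v j).
case: (leqP N1 i) => h.
  have h1 := hN1 i h; rewrite ltr_pdivlMr // in h1.
  apply: le_lt_trans h1; exact: ler_wpM2l.
have hNi : (N2 <= N - i)%N by lia.
have h1 := hN2 _ hNi.
have h2 := hN2 N (leq_trans (leq_addl _ _) hN).
have h3 : abs (\sum_(j < N - i) v j - \sum_(j < N) v j) < e / Bu.
  have -> : \sum_(j < N - i) v j - \sum_(j < N) v j =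
     (\sum_(j < N - i) v j - V) + - (\sum_(j < N) v j - V) by ring.
  by apply: le_lt_trans (abs_ultra _ _) _; rewrite absN gt_max h1 h2.
rewrite ltr_pdivlMr // in h3.
apply: le_lt_trans h3; rewrite mulrC; exact: ler_wpM2l.
Qed.

Lemma rep_cprod F G a c : rep F a -> rep G c ->
  rep (fun z => F z * G z) (cprod a c).
Proof.
move=> [ha hF] [hc hG]; split; first exact: EC_cprod.
move=> z.
have := series_mul (EC_small z ha) (EC_small z hc) (hF z) (hG z).
apply: conv_ext => N; apply: eq_bigr => n _.
rewrite /cprod mulr_suml; apply: eq_bigr => i _.
have hi : (i <= n)%N by rewrite -ltnS.
have e : z ^+ n = z ^+ i * z ^+ (n - i) by rewrite -exprD subnKC.
by rewrite e; ring.
Qed.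


Lemma rep_ext F G a : (forall z, F z = G z) -> rep F a -> rep G a.
Proof. by move=> h [ha hF]; split => // z; rewrite -h. Qed.

Lemma muc_ext a c r : (forall n, abs (a n) = abs (c n)) -> muc r a = muc r c.
Proof.
move=> h; rewrite /muc.
have -> : (fun n => abs (a n) * r ^+ n) = (fun n => abs (c n) * r ^+ n).
  by apply: funext => n; rewrite h.
by [].
Qed.

Lemma rep_scale F a al : abs al = 1 -> rep F a ->
  rep (fun z => F (al * z)) (fun n => a n * al ^+ n).
Proof.
move=> hal [ha hF]; split.
  move=> r hr e he; have [N hN] := ha r hr e he; exists N => n hn.
  by rewrite absM absX hal expr1n mulr1; apply: hN.
move=> z; apply: (conv_ext _ (hF (al * z))) => N; apply: eq_bigr => i _.
by rewrite exprMn mulrA.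
Qed.

Definition trc (a : nat -> K) (be : K) k n := a n * ('C(n, k))%:R * be ^+ (n - k).

Lemma tt_zero a be k n : (n < k)%N -> trc a be k n = 0.
Proof. by move=> h; rewrite /trc bin_small // mulr0 mul0r. Qed.

Lemma tbound a be k n (r : R) : 0 < r -> abs be <= r ->
  abs (trc a be k n) * r ^+ k <= abs (a n) * r ^+ n.
Proof.
move=> hr hbe.
have hrn : 0 <= abs (a n) * r ^+ n by apply: mulr_ge0; [exact: abs_ge0 | apply: exprn_ge0; apply: ltW].
case: (ltnP n k) => h; first by rewrite tt_zero // abs0 mul0r.
rewrite /trc !absM absX.
have e : r ^+ n = r ^+ (n - k) * r ^+ k by rewrite -exprD subnK.
rewrite e mulrA; apply: ler_wpM2r; first by apply: exprn_ge0; apply: ltW.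
rewrite -mulrA; apply: ler_wpM2l; first exact: abs_ge0.
rewrite -[X in _ <= X]mul1r; apply: ler_pM.
- exact: abs_ge0.
- apply: exprn_ge0; exact: abs_ge0.
- exact: abs_natr.
- apply: pow_le => //; exact: abs_ge0.
Qed.

Lemma tt_small a be k : EC a -> small (trc a be k).
Proof.
move=> ha e he.
set r := Num.max (abs be) 1.
have hr : 0 < r by rewrite lt_max ltr01 orbT.
have hbe : abs be <= r by rewrite le_max lexx.
have hrk : 0 < r ^+ k by rewrite exprn_gt0.
have [N hN] := ha r hr (e * r ^+ k) (mulr_gt0 he hrk).
exists N => n hn; rewrite -(ltr_pM2r hrk).
exact: le_lt_trans (tbound _ _ _ hr hbe) (hN n hn).
Qed.

Lemma rep_trans F a be : rep F a ->
  exists c, rep (fun z => F (z + be)) c /\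
    forall r, 0 < r -> abs be <= r -> muc r c <= muc r a.
Proof.
move=> [ha hF].
have [c hc] := choice (fun k => series_conv (tt_small be k ha)).
have hck : forall k, abs_conv abs (fun N => \sum_(n < N) trc a be k n) (c k).
  by move=> k; apply: hc.
exists c; split; last first.
  move=> r hr hbe; apply: muc_le => k.
  have hrk : 0 < r ^+ k by rewrite exprn_gt0.
  rewrite -ler_pdivlMr //.
  have := tail_bound (N0 := 0) (hck k) (M := muc r a / r ^+ k).
  rewrite big_ord0 subr0; apply; first by rewrite divr_ge0 ?muc_ge0 // ltW.
  move=> n _; rewrite ler_pdivlMr //.
  exact: le_trans (tbound _ _ _ hr hbe) (muc_ub _ ha hr).
split.
  move=> r hr e he.
  set R0 := Num.max r (abs be).
  have hR : 0 < R0 by rewrite lt_max hr.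
  have hbe : abs be <= R0 by rewrite le_max lexx orbT.
  have [N hN] := ha R0 hR (e / 2) (divr_gt0 he (ltr0Sn _ 1)).
  exists N => k hk.
  have hRk : 0 < R0 ^+ k by rewrite exprn_gt0.
  have := tail_bound (N0 := 0) (hck k) (M := (e / 2) / R0 ^+ k).
  rewrite big_ord0 subr0 => H.
  have {H} H : abs (c k) <= (e / 2) / R0 ^+ k.
    apply: H; first by rewrite divr_ge0 // ?ltW // divr_gt0.
    move=> n _; rewrite ler_pdivlMr //.
    case: (ltnP n N) => hn.
      by rewrite tt_zero ?abs0 ?mul0r ?divr_ge0 ?ltW //; apply: leq_trans hk.
    exact: le_trans (tbound _ _ _ hR hbe) (ltW (hN n hn)).
  rewrite ler_pdivlMr // in H.
  apply: le_lt_trans (_ : abs (c k) * R0 ^+ k < e); last by lra.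
  apply: ler_wpM2l; first exact: abs_ge0.
  apply: pow_le; first exact: ltW.
  by rewrite le_max lexx.
move=> z.
set R0 := Num.max (Num.max (abs z) (abs be)) 1.
have hR : 0 < R0 by rewrite lt_max ltr01 orbT.
have hbe : abs be <= R0 by rewrite !le_max lexx !orbT.
have hz : abs z <= R0 by rewrite !le_max lexx.
have hid : forall N n, (n < N)%N ->
    \sum_(k < N) trc a be k n * z ^+ k = a n * (z + be) ^+ n.
  move=> N n hn.
  rewrite addrC exprDn mulr_sumr (big_ord_widen N (fun k => a n * (be ^+ (n - k) * z ^+ k *+ 'C(n, k))) hn).
  rewrite [RHS]big_mkcond /=; apply: eq_bigr => k _.
  case: ifP => hk; first by rewrite /trc mulr_natr; ring.
  rewrite tt_zero ?mul0r //; by rewrite ltnNge -ltnS hk.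
apply: (conv_close (hF (z + be))).
move=> e he.
have [N hN] := ha R0 hR (e / 2) (divr_gt0 he (ltr0Sn _ 1)).
exists N => M hM.
have -> : \sum_(n < M) a n * (z + be) ^+ n =
    \sum_(k < M) (\sum_(n < M) trc a be k n) * z ^+ k.
  rewrite (eq_bigr (fun n : 'I_M => \sum_(k < M) trc a be k n * z ^+ k)); last first.
    by move=> n _; rewrite hid.
  rewrite exchange_big /=; apply: eq_bigr => k _; by rewrite mulr_suml.
rewrite -sumrB; apply: abs_big_lt => // k _.
rewrite -mulrBl absM absX.
have hRk : 0 < R0 ^+ k by rewrite exprn_gt0.
have := tail_bound (N0 := M) (hck k) (M := (e / 2) / R0 ^+ k).
move=> H.
have {H} H : abs (c k - \sum_(n < M) trc a be k n) <= (e / 2) / R0 ^+ k.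
  apply: H; first by rewrite divr_ge0 // ?ltW // divr_gt0.
  move=> n hn; rewrite ler_pdivlMr //.
  exact: le_trans (tbound _ _ _ hR hbe) (ltW (hN n (leq_trans hM hn))).
rewrite ler_pdivlMr // in H.
apply: le_lt_trans (_ : abs (c k - \sum_(n < M) trc a be k n) * R0 ^+ k < e); last by lra.
apply: ler_wpM2l; first exact: abs_ge0.
apply: pow_le => //; exact: abs_ge0.
Qed.


Lemma rep_L F a al be : abs al = 1 -> rep F a ->
  exists c, rep (fun z => F (al * z + be)) c /\
    forall r, 0 < r -> abs be <= r -> muc r c <= muc r a.
Proof.
move=> hal ha.
have [c [hc hmuc]] := rep_trans be ha.
exists (fun n => c n * al ^+ n); split; first exact: (rep_scale hal hc).
move=> r hr hbe; rewrite (@muc_ext _ c); first exact: hmuc.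
by move=> n; rewrite absM absX hal expr1n mulr1.
Qed.

Lemma muc_L F a c al be r : abs al = 1 -> 0 < r -> abs be <= r ->
  rep F a -> rep (fun z => F (al * z + be)) c -> muc r c = muc r a.
Proof.
move=> hal hr hbe ha hc.
have [c1 [hc1 hm1]] := rep_L be hal ha.
rewrite -(rep_uniq hc1 hc).
apply/eqP; rewrite eq_le hm1 //=.
have hal0 : al != 0 by apply/eqP => h; move: hal; rewrite h abs0; lra.
have hal' : abs al^-1 = 1 by rewrite absV hal invr1.
have [c2 [hc2 hm2]] := rep_L (- (al^-1 * be)) hal' hc1.
have hc2' : rep F c2.
  apply: rep_ext hc2 => z /=; congr F; field; exact: hal0.
rewrite (rep_uniq ha hc2').
apply: hm2 => //; by rewrite absN absM hal' mul1r.
Qed.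


Local Notation mue r F := (mu_entire abs r F).

Lemma coefsE F a : rep F a -> coefs abs F = a.
Proof.
move=> ha; rewrite /coefs; case: pselect => [H|H]; last by exfalso; apply: H; exists a.
by case: (cid H) => /= a' ha'; apply: rep_uniq ha' ha.
Qed.

Lemma mueE F a r : rep F a -> mue r F = muc r a.
Proof. by move=> ha; rewrite /mu_entire (coefsE ha). Qed.

Lemma ent_nz F : entire abs F -> (exists z, F z != 0) ->
  exists d, 0 < d /\ forall z, 0 < abs z < d -> F z != 0.
Proof. by move=> [a ha] hz; apply: (NZ ha); apply: rep_nz ha hz. Qed.

Lemma mue_gt0 F r : entire abs F -> (exists z, F z != 0) -> 0 < r -> 0 < mue r F.
Proof.
move=> [a ha] hz hr; rewrite (mueE _ ha); apply: muc_gt0 => //; first by case: ha.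
exact: rep_nz ha hz.
Qed.

Lemma ent_mul F G : entire abs F -> entire abs G -> entire abs (fun z => F z * G z).
Proof. by move=> [a ha] [c hc]; exists (cprod a c); apply: rep_cprod. Qed.

Lemma ent_sub F G : entire abs F -> entire abs G -> entire abs (fun z => F z - G z).
Proof. by move=> [a ha] [c hc]; eexists; apply: rep_sub ha hc. Qed.

Lemma mue_mul F G r : entire abs F -> entire abs G -> 0 < r ->
  mue r (fun z => F z * G z) = mue r F * mue r G.
Proof.
move=> [a ha] [c hc] hr.
rewrite (mueE _ (rep_cprod ha hc)) (mueE _ ha) (mueE _ hc).
by apply: muc_cprod => //; [case: ha | case: hc].
Qed.

Lemma mue_ge0 F r : entire abs F -> 0 < r -> 0 <= mue r F.
Proof. by move=> [a ha] hr; rewrite (mueE _ ha); apply: muc_ge0 => //; case: ha. Qed.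

Lemma mue_sub F G r : entire abs F -> entire abs G -> 0 < r ->
  mue r (fun z => F z - G z) <= Num.max (mue r F) (mue r G).
Proof.
move=> [a ha] [c hc] hr.
rewrite (mueE _ (rep_sub ha hc)) (mueE _ ha) (mueE _ hc).
apply: muc_le => n.
have hrn : 0 <= r ^+ n by apply: exprn_ge0; apply: ltW.
apply: le_trans (_ : Num.max (abs (a n)) (abs (c n)) * r ^+ n <= _).
  apply: ler_wpM2r => //; apply: le_trans (abs_ultra _ _) _; by rewrite absN.
rewrite maxr_pMl // ge_max !le_max !muc_ub ?orbT //; by [case: ha | case: hc].
Qed.

Lemma mue_L F al be r : abs al = 1 -> 0 < r -> abs be <= r -> entire abs F ->
  entire abs (fun z => F (al * z + be)) /\ mue r (fun z => F (al * z + be)) = mue r F.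
Proof.
move=> hal hr hbe [a ha].
have [c [hc _]] := rep_L be hal ha.
split; first by exists c.
by rewrite (mueE _ hc) (mueE _ ha); apply: muc_L hc.
Qed.

Lemma small_common d1 d2 : 0 < d1 -> 0 < d2 ->
  exists z, 0 < abs z < d1 /\ 0 < abs z < d2.
Proof.
move=> h1 h2; have hd : 0 < Num.min d1 d2 by rewrite lt_min h1 h2.
have [z /andP [hz0 hz]] := exists_small hd.
by exists z; move: hz; rewrite lt_min hz0 => /andP [-> ->].
Qed.


Lemma small3 d1 d2 d3 : 0 < d1 -> 0 < d2 -> 0 < d3 ->
  exists z, [/\ 0 < abs z < d1, 0 < abs z < d2 & 0 < abs z < d3].
Proof.
move=> h1 h2 h3; have hd : 0 < Num.min (Num.min d1 d2) d3 by rewrite !lt_min h1 h2 h3.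
have [z /andP [hz0 hz]] := exists_small hd.
by exists z; move: hz; rewrite !lt_min hz0 => /andP [/andP [-> ->] ->].
Qed.

Lemma mero_indep f g h g' h' r : mero_rep abs f g h -> mero_rep abs f g' h' -> 0 < r ->
  mue r g / mue r h = mue r g' / mue r h'.
Proof.
case=> eg eh hnz [k [ek knz hk]]; case=> eg' eh' hnz' [k' [ek' knz' hk']] hr.
have [d1 [hd1 hk1]] := ent_nz ek knz; have [d2 [hd2 hk2]] := ent_nz ek' knz'.
have hmh := mue_gt0 eh hnz hr; have hmh' := mue_gt0 eh' hnz' hr.
move: (eg) (eh) (eg') (eh') => [ag hag] [ah hah] [ag' hag'] [ah' hah'].
have hD := rep_sub (rep_cprod hag hah') (rep_cprod hag' hah).
have hcoef : forall n, cprod ag ah' n = cprod ag' ah n.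
  move=> n; apply/eqP; rewrite -subr_eq0; apply/negPn/negP => hn.
  have [d3 [hd3 hD3]] := NZ hD (ex_intro _ n hn).
  have [z [hz1 hz2 hz3]] := small3 hd1 hd2 hd3.
  have [hhz hfz] := hk z (hk1 z hz1); have [hhz' hfz'] := hk' z (hk2 z hz2).
  have := hD3 z hz3; rewrite subr_eq0 -eqr_div // -hfz -hfz' eqxx //.
have e : muc r (cprod ag ah') = muc r (cprod ag' ah) by congr muc; apply: funext.
have [ecg _] := hag; have [ech _] := hah; have [ecg' _] := hag'; have [ech' _] := hah'.
move: e; rewrite !muc_cprod //.
rewrite -(mueE _ hag) -(mueE _ hah) -(mueE _ hag') -(mueE _ hah') => e.
have H := eqr_div (mue r g) (mue r g') (lt0r_neq0 hmh) (lt0r_neq0 hmh').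
apply/eqP; rewrite H; apply/eqP; exact e.
Qed.

Lemma muE f g h r : mero_rep abs f g h -> 0 < r -> mu abs r f = mue r g / mue r h.
Proof.
move=> hf hr; rewrite /mu; case: pselect => [H|H]; last first.
  by exfalso; apply: H; exists (g, h).
by case: (cid H) => /= gh hgh; apply: mero_indep hgh hf hr.
Qed.


Lemma ent_L F al be : abs al = 1 -> entire abs F -> entire abs (fun z => F (al * z + be)).
Proof. by move=> hal [a ha]; have [c [hc _]] := rep_L be hal ha; exists c. Qed.

Lemma ent_mul_nz (F G : K -> K) : entire abs F -> entire abs G -> (exists z, F z != 0) ->
  (exists z, G z != 0) -> exists z, F z * G z != 0.
Proof.
move=> eF eG nF nG; have [d1 [hd1 h1]] := ent_nz eF nF; have [d2 [hd2 h2]] := ent_nz eG nG.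
have [z [hz1 hz2 _]] := small3 hd1 hd2 ltr01.
by exists z; rewrite mulf_neq0 // ?h1 ?h2.
Qed.

Lemma nzL (F : K -> K) (al be : K) : al != 0 -> (exists z, F z != 0) -> exists z, F (al * z + be) != 0.
Proof.
move=> hal [z0 hz0]; exists (al^-1 * (z0 - be)).
by have -> : al * (al^-1 * (z0 - be)) + be = z0 by field.
Qed.

Lemma mero_L f g h al be : abs al = 1 -> mero_rep abs f g h ->
  mero_rep abs (fun z => f (al * z + be)) (fun z => g (al * z + be)) (fun z => h (al * z + be)).
Proof.
move=> hal [eg eh hnz [k [ek knz hk]]].
have hal0 : al != 0 by apply/eqP => e; move: hal; rewrite e abs0; lra.
split; [exact: ent_L | exact: ent_L | exact: nzL |].
exists (fun z => k (al * z + be)); split; [exact: ent_L | exact: nzL |].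
by move=> z hz; apply: hk.
Qed.

Lemma mero_sub f1 g1 h1 f2 g2 h2 : mero_rep abs f1 g1 h1 -> mero_rep abs f2 g2 h2 ->
  mero_rep abs (fun z => f1 z - f2 z) (fun z => g1 z * h2 z - g2 z * h1 z)
    (fun z => h1 z * h2 z).
Proof.
move=> [eg1 eh1 hnz1 [k1 [ek1 knz1 hk1]]] [eg2 eh2 hnz2 [k2 [ek2 knz2 hk2]]].
split; [apply: ent_sub; apply: ent_mul => // | exact: ent_mul | exact: ent_mul_nz |].
exists (fun z => k1 z * k2 z); split; [exact: ent_mul | exact: ent_mul_nz |].
move=> z; rewrite mulf_eq0 negb_or => /andP [hz1 hz2].
have [h1z f1z] := hk1 z hz1; have [h2z f2z] := hk2 z hz2.
split; first by rewrite mulf_neq0.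
by rewrite f1z f2z; field; rewrite h1z h2z.
Qed.

Lemma mero_div f1 g1 h1 f2 g2 h2 : mero_rep abs f1 g1 h1 -> mero_rep abs f2 g2 h2 ->
  (exists z, g2 z != 0) ->
  mero_rep abs (fun z => f1 z / f2 z) (fun z => g1 z * h2 z) (fun z => h1 z * g2 z).
Proof.
move=> [eg1 eh1 hnz1 [k1 [ek1 knz1 hk1]]] [eg2 eh2 hnz2 [k2 [ek2 knz2 hk2]]] hg2.
split; [exact: ent_mul | exact: ent_mul | exact: ent_mul_nz |].
exists (fun z => k1 z * (k2 z * g2 z)); split.
- by apply: ent_mul => //; apply: ent_mul.
- by apply: ent_mul_nz => //; [apply: ent_mul | apply: ent_mul_nz].
move=> z; rewrite !mulf_eq0 !negb_or => /andP [hz1 /andP [hz2 hg]].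
have [h1z f1z] := hk1 z hz1; have [h2z f2z] := hk2 z hz2.
split; first by rewrite h1z hg.
by rewrite f1z f2z; field; rewrite h1z h2z hg.
Qed.

Lemma mero_g_nz f g h : mero_rep abs f g h -> ~ mero_zero abs f -> exists z, g z != 0.
Proof.
move=> [eg eh hnz [k [ek knz hk]]] hf; apply/not_existsP => hg; apply: hf.
exists k; split => // z hz; have [_ ->] := hk z hz.
have gz : g z = 0 by apply/eqP; apply/negPn/negP; exact: hg z.
by rewrite gz mul0r.
Qed.


Lemma delta_rep f g h al be r : abs al = 1 -> 0 < r -> abs be <= r ->
  mero_rep abs f g h -> forall m, exists G H,
  mero_rep abs (DeltaLn (fun z => al * z + be) m f) G H /\
  mue r G / mue r H <= mue r g / mue r h.
Proof.
move=> hal hr hbe hf; elim=> [|m [G [H [hGH hrat]]]]; first by exists g, h.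
have hL := mero_L be hal hGH.
have hs := mero_sub hL hGH.
exists (fun z => G (al * z + be) * H z - G z * H (al * z + be)),
  (fun z => H (al * z + be) * H z); split; first exact: hs.
case: (hGH) => eG eH nH _.
have [eGL mGL] := mue_L hal hr hbe eG.
have [eHL mHL] := mue_L hal hr hbe eH.
have mH := mue_gt0 eH nH hr.
have mG := mue_ge0 eG hr.
have e1 : mue r (fun z => G (al * z + be) * H z - G z * H (al * z + be)) <= mue r G * mue r H.
  apply: le_trans (mue_sub (ent_mul eGL eH) (ent_mul eG eHL) hr) _.
  by rewrite !mue_mul // mGL mHL maxxx.
have e2 : mue r (fun z => H (al * z + be) * H z) = mue r H * mue r H.
  by rewrite mue_mul // mHL.
rewrite e2; apply: le_trans hrat.
have -> : mue r G / mue r H = (mue r G * mue r H) / (mue r H * mue r H).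
  by field; rewrite gt_eqF.
apply: ler_wpM2r => //; rewrite invr_ge0; apply: mulr_ge0; exact: ltW.
Qed.

End Abs.

Unset Implicit Arguments.

Theorem lemma2p3 (R : realType) (K : closedFieldType) (abs : K -> R)
  (Habs : nonarch_complete_field abs)
  (a b : K) (Ha : abs a = 1)
  (f : K -> K) (Hf : meromorphic abs f) (Hf0 : ~ mero_zero abs f)
  (m : nat) (Hm : (0 < m)%N) :
  let L := fun z : K => a * z + b in
  forall r : R, abs b < r ->
    [/\ mu abs r (f \o L) = mu abs r f,
        mu abs r (fun z => (f \o L) z / f z) = 1
      & mu abs r (fun z => DeltaLn L m f z / f z) <= 1].
Proof.
move=> L r hbr.
have hr : 0 < r := le_lt_trans (abs_ge0 Habs b) hbr.
have hbe : abs b <= r := ltW hbr.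
case: Hf => [[g h] /= hf].
have hfL := mero_L Habs b Ha hf.
have hg := mero_g_nz hf Hf0.
case: (hf) => eg eh nh _.
have [egL mgL] := mue_L Habs Ha hr hbe eg.
have [ehL mhL] := mue_L Habs Ha hr hbe eh.
have mh := mue_gt0 Habs eh nh hr.
have mg := mue_gt0 Habs eg hg hr.
have e0 : mu abs r f = mu_entire abs r g / mu_entire abs r h := muE Habs hf hr.
split.
- have -> : mu abs r (f \o L) = mu_entire abs r (fun z => g (a * z + b)) /
      mu_entire abs r (fun z => h (a * z + b)) := muE Habs hfL hr.
  by rewrite mgL mhL e0.
- have hd := mero_div Habs hfL hf hg.
  have -> : mu abs r (fun z => (f \o L) z / f z) =
    mu_entire abs r (fun z => g (a * z + b) * h z) /
    mu_entire abs r (fun z => h (a * z + b) * g z) := muE Habs hd hr.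
  rewrite !(mue_mul Habs) // mgL mhL [X in _ / X]mulrC divff //.
  by rewrite mulf_neq0 // gt_eqF.
- have [G [H [hGH hrat]]] := delta_rep Habs Ha hr hbe hf m.
  have hd := mero_div Habs hGH hf hg.
  have -> : mu abs r (fun z => DeltaLn L m f z / f z) =
    mu_entire abs r (fun z => G z * h z) /
    mu_entire abs r (fun z => H z * g z) := muE Habs hd hr.
  case: (hGH) => eG eH nH _.
  have mH := mue_gt0 Habs eH nH hr.
  rewrite !(mue_mul Habs) //.
  have -> : mu_entire abs r G * mu_entire abs r h / (mu_entire abs r H * mu_entire abs r g)
    = (mu_entire abs r G / mu_entire abs r H) * (mu_entire abs r h / mu_entire abs r g).
    by field; rewrite !gt_eqF.
  apply: le_trans (_ : (mu_entire abs r g / mu_entire abs r h) *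
     (mu_entire abs r h / mu_entire abs r g) <= 1).
    apply: ler_wpM2r => //; apply: divr_ge0; exact: ltW.
  have -> : mu_entire abs r g / mu_entire abs r h * (mu_entire abs r h / mu_entire abs r g) = 1.
    by field; rewrite !gt_eqF.
  by [].
Qed.
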